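(* Let $p$ be a prime, let $f\ge1$, and let $q\ge1$ be a power of $p$. For $0\le i\le p^f-2$ and $0\le r\le q-1$ let $A_{i,r}=\{m\ge0: m\equiv i\pmod{p^f-1},\ m\equiv r\pmod q\}$. Let $s(n)_{n\ge0}$ be a sequence of $p$-adic integers with an approximate twisted interpolation $\{(s_{i,r},A_{i,r}):0\le i\le p^f-2,\ 0\le r\le q-1\}$. Then $$\lim_{\alpha\to\infty}\frac{|\{s(n)\bmod p^\alpha:n\ge0\}|}{p^\alpha}=\mu\Big(\mathbb{Z}_p\cap\bigcup_{i,r}s_{i,r}(r+q\mathbb{Z}_p)\Big).$$
   Context: Here each $s_{i,r}:\mathbb{Z}_p\to K$ is continuous, $K$ a finite extension of $\mathbb{Q}_p$ with the unique absolute value $|\cdot|_p$ extending the $p$-adic one, and ''approximate twisted interpolation'' means there are constants $C\ge0$, $0\le D<1$ with $|s(n)-s_{i,r}(n)|_p\le CD^n$ for all $n\in A_{i,r}$ and all $i,r$. $\mathbb{Z}_p$ is regarded as a subset of $K$. $\mu$ is the Haar measure on $\mathbb{Z}_p$ normalized by $\mu(m+p^\alpha\mathbb{Z}_p)=p^{-\alpha}$. *)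

(* Defs.v *)
From HB Require Import structures.
From mathcomp Require Import all_boot all_order all_algebra.
From mathcomp Require Import all_classical all_reals all_analysis.
Set Implicit Arguments. Unset Strict Implicit. Unset Printing Implicit Defensive.
Import Order.TTheory GRing.Theory Num.Theory.
Local Open Scope classical_set_scope.
Local Open Scope ring_scope.

Section PadicDefs.
Variables (R : realType) (p : nat) (K : fieldType) (absK : K -> R).

Definition padic_abs_int (z : int) : R :=
  if z == 0 then 0 else (p%:R) ^- (logn p `|z|%N).

(* Q_p regarded as a subset of K: the closure of Q in K *)
Definition Qp_in : set K :=
  [set x | forall e : R, 0 < e -> exists t : rat, absK (x - ratr t) < e].

(* Z_p regarded as a subset of K: the closure of Z in K *)
Definition Zp_in : set K :=
  [set x | forall a : nat, exists m : int, absK (x - m%:~R) <= (p%:R) ^- a].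

(* (K, absK) is a finite extension of Q_p equipped with the (unique)
   absolute value extending the p-adic one *)
Definition is_finite_ext_Qp : Prop :=
  [/\ (forall x, absK x = 0 <-> x = 0),
      (forall x y, absK (x * y) = absK x * absK y),
      (forall x y, absK (x + y) <= Num.max (absK x) (absK y)),
      (forall z : int, absK z%:~R = padic_abs_int z) &
      (
      (forall u : nat -> K,
          (forall e : R, 0 < e -> exists N, forall m n, (N <= m)%N -> (N <= n)%N ->
                absK (u m - u n) < e) ->
          exists l, forall e : R, 0 < e -> exists N, forall n, (N <= n)%N ->
                absK (u n - l) < e) /\
      exists d (b : 'I_d -> K),
        (forall x, exists c : 'I_d -> K, (forall i, Qp_in (c i)) /\
                     x = \sum_(i < d) c i * b i) /\
        (forall c : 'I_d -> K, (forall i, Qp_in (c i)) ->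
                     \sum_(i < d) c i * b i = 0 -> forall i, c i = 0))].

Definition cont_on_Zp (g : K -> K) : Prop :=
  forall x, Zp_in x -> forall e : R, 0 < e -> exists2 delta : R, 0 < delta &
    forall y, Zp_in y -> absK (x - y) < delta -> absK (g x - g y) < e.

Definition coset (m a : nat) : set K :=
  [set x | exists2 y, Zp_in y & x = m%:R + (p ^ a)%:R * y].

(* Haar measure on Z_p normalized by mu(m + p^a Z_p) = p^-a, realized as the
   associated (Caratheodory) outer measure: infimum over countable covers by
   cosets m + p^a Z_p of the sums of p^-a. *)
Definition cover_weight (c : option (nat * nat)) : \bar R :=
  match c with None => 0%E | Some (_, a) => (((p%:R) ^- a : R)%:E) end.
Definition cover_set (c : option (nat * nat)) : set K :=
  match c with None => set0 | Some (m, a) => coset m a end.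
Definition haar (E : set K) : \bar R :=
  ereal_inf [set (\sum_(0 <= j <oo) cover_weight (c j))%E |
               c in [set c : nat -> option (nat * nat) |
                     E `<=` \bigcup_j cover_set (c j)]].

Definition nres (s : nat -> K) (a : nat) : nat :=
  (\sum_(i < p ^ a) `[< exists n, coset i a (s n) >])%N.

Definition A_set (f q i r : nat) : set nat :=
  [set m | m %% (p ^ f - 1) = i /\ m %% q = r]%N.

End PadicDefs.

(* Main.v *)
Require Import Defs.
From HB Require Import structures.
From mathcomp Require Import all_boot all_order all_algebra.
From mathcomp Require Import all_classical all_reals all_analysis.
From mathcomp Require Import ring lra zify.
Import Order.TTheory GRing.Theory Num.Theory.
Set Implicit Arguments. Unset Strict Implicit. Unset Printing Implicit Defensive.
Local Open Scope classical_set_scope.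
Local Open Scope ring_scope.

Section Basics.
Variables (R : realType) (p : nat) (K : fieldType) (absK : K -> R).
Hypothesis pP : prime p.
Hypothesis Habs : is_finite_ext_Qp p absK.
Local Notation P := (p%:R : R).

Lemma P_gt1 : 1 < P.
Proof. by rewrite ltr1n prime_gt1. Qed.
Lemma P_gt0 : 0 < P.
Proof. exact: lt_trans ltr01 P_gt1. Qed.

Lemma absM x y : (absK (x * y)) = (absK (x)) * (absK (y)).
Proof. by case: Habs => _ H _ _ _. Qed.
Lemma abs_max x y : (absK (x + y)) <= Num.max (absK (x)) (absK (y)).
Proof. by case: Habs => _ _ H _ _. Qed.
Lemma abs_eq0 x : (absK (x)) = 0 <-> x = 0.
Proof. by case: Habs => H _ _ _ _. Qed.
Lemma abs_int (z : int) : (absK (z%:~R)) = padic_abs_int R p z.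
Proof. by case: Habs => _ _ _ H _. Qed.
Lemma abs0 : (absK (0)) = 0.
Proof. exact/abs_eq0. Qed.
Lemma absN1 : (absK (-1)) = 1.
Proof.
have := abs_int (-1); rewrite /padic_abs_int /= => ->.
by rewrite (_ : logn p 1 = 0)%N ?expr0 ?invr1 // logn1.
Qed.
Lemma abs1 : (absK (1)) = 1.
Proof.
have := abs_int 1; rewrite /padic_abs_int /= => ->.
by rewrite logn1 expr0 invr1.
Qed.
Lemma absN x : (absK (- x)) = (absK (x)).
Proof. by rewrite -mulN1r absM absN1 mul1r. Qed.
Lemma abs_ge0 x : 0 <= (absK (x)).
Proof.
have := abs_max x (- x); rewrite subrr abs0 absN.
by rewrite /Num.max; case: ifP.
Qed.
Lemma absB x y : (absK (x - y)) = (absK (y - x)).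
Proof. by rewrite -absN opprB. Qed.
Lemma abs_le x y e : (absK (x)) <= e -> (absK (y)) <= e -> (absK (x + y)) <= e.
Proof.
move=> hx hy; apply: le_trans (abs_max x y) _.
by rewrite ge_max hx hy.
Qed.
Lemma abs_tr x y z e : (absK (x - y)) <= e -> (absK (y - z)) <= e -> (absK (x - z)) <= e.
Proof.
move=> h1 h2; have := abs_le h1 h2.
by rewrite addrA subrK.
Qed.
Lemma abs_lt x y e : (absK (x)) < e -> (absK (y)) < e -> (absK (x + y)) < e.
Proof.
move=> hx hy; apply: le_lt_trans (abs_max x y) _.
by rewrite gt_max hx hy.
Qed.

Lemma Pexp_le a b : (P ^- a <= P ^- b) = (b <= a)%N.
Proof.
rewrite lef_pV2 ?posrE ?exprn_gt0 ?P_gt0 //.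
by rewrite (ler_eXn2l P_gt1).
Qed.
Lemma Pexp_lt a b : (P ^- a < P ^- b) = (b < a)%N.
Proof.
rewrite ltf_pV2 ?posrE ?exprn_gt0 ?P_gt0 //.
by rewrite (ltr_eXn2l P_gt1).
Qed.
Lemma Pexp_gt0 a : 0 < P ^- a.
Proof. by rewrite invr_gt0 exprn_gt0 ?P_gt0. Qed.

Lemma abs_int_dvd (z : int) a : ((absK (z%:~R)) <= P ^- a) = (p ^ a %| `|z|)%N.
Proof.
rewrite abs_int /padic_abs_int; case: eqP => [->|/eqP z0].
  by rewrite dvdn0 (ltW (Pexp_gt0 a)).
by rewrite Pexp_le pfactor_dvdn // absz_gt0.
Qed.

Lemma abs_nat (n : nat) : (absK (n%:R)) = padic_abs_int R p n.
Proof. exact: (abs_int n). Qed.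

Lemma abs_int_le1 (z : int) : (absK (z%:~R)) <= 1.
Proof. by have := abs_int_dvd z 0; rewrite expr0 invr1 expn0 dvd1n. Qed.

Lemma abs_pexp a : (absK ((p ^ a)%:R)) = P ^- a.
Proof.
rewrite abs_nat /padic_abs_int /= pfactorK //.
have -> : ((p^a)%N%:Z == 0) = false.
  by apply/negbTE; rewrite eqz_nat -lt0n expn_gt0 prime_gt0.
by [].
Qed.


Local Notation Zp := (Zp_in p absK).
Definition ball (c : K) (a : nat) : set K :=
  fun x => Zp x /\ absK (x - c) <= P ^- a.

Lemma Zp_int (z : int) : Zp z%:~R.
Proof. by move=> a; exists z; rewrite subrr abs0 ltW ?Pexp_gt0. Qed.
Lemma Zp_nat (n : nat) : Zp n%:R.
Proof. exact: (Zp_int n). Qed.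

Lemma Zp_le1 x : Zp x -> absK x <= 1.
Proof.
move=> /(_ 0%N) [m]; rewrite expr0 invr1 => hm.
by rewrite -(subrK m%:~R x) abs_le // abs_int_le1.
Qed.

Lemma Zp_add x y : Zp x -> Zp y -> Zp (x + y).
Proof.
move=> hx hy a; have [m hm] := hx a; have [m' hm'] := hy a.
exists (m + m'); rewrite intrD.
rewrite (_ : x + y - (m%:~R + m'%:~R) = (x - m%:~R) + (y - m'%:~R)); last by ring.
exact: abs_le.
Qed.
Lemma Zp_opp x : Zp x -> Zp (- x).
Proof.
move=> hx a; have [m hm] := hx a; exists (- m).
by rewrite intrN -opprD absN.
Qed.
Lemma Zp_mul x y : Zp x -> Zp y -> Zp (x * y).
Proof.
move=> hx hy a; have [m hm] := hx a; have [m' hm'] := hy a.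
exists (m * m'); rewrite intrM.
rewrite (_ : x * y - m%:~R * m'%:~R = x * (y - m'%:~R) + m'%:~R * (x - m%:~R)); last by ring.
apply: abs_le; rewrite absM.
  by rewrite -[P ^- a]mul1r ler_pM ?abs_ge0 ?Zp_le1.
by rewrite -[P ^- a]mul1r ler_pM ?abs_ge0 ?abs_int_le1.
Qed.

Lemma absV x : x != 0 -> absK (x^-1) = (absK x)^-1.
Proof.
move=> x0; have : absK x * absK (x^-1) = 1 by rewrite -absM mulfV ?abs1.
have ax : absK x != 0 by apply/eqP => /abs_eq0; apply/eqP.
by move=> h; rewrite -[RHS]mulr1 -h mulKf.
Qed.

Lemma natK n : (n%:R : K) = (n%:Z)%:~R.
Proof. by []. Qed.

Lemma pexp_neq0 a : (p ^ a)%:R != 0 :> K.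
Proof.
apply/eqP => /abs_eq0; rewrite abs_pexp => /eqP.
by rewrite gt_eqF ?Pexp_gt0.
Qed.

Lemma coset_ball (m a : nat) x : coset p absK m a x <-> ball m%:R a x.
Proof.
split.
  case=> y hy ->; split.
    by apply: Zp_add; [exact: Zp_nat | apply: Zp_mul => //; exact: Zp_nat].
  rewrite (addrC (m%:R)) addrK absM abs_pexp -[X in _ <= X]mulr1.
  by rewrite ler_pM ?abs_ge0 ?Zp_le1 // ltW ?Pexp_gt0.
case=> hx hxm; exists ((x - m%:R) / (p ^ a)%:R); last first.
  by rewrite mulrC divfK ?pexp_neq0 // addrC subrK.
move=> b; have [m' hm'] := hx (a + b)%N.
have : absK ((m' - m%:Z)%:~R : K) <= P ^- a.
  rewrite intrB -natK; apply: abs_tr _ hxm; rewrite absB.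
  apply: le_trans hm' _; by rewrite Pexp_le leq_addr.
rewrite abs_int_dvd => /dvdnP [t ht].
have [k ht'] : exists k, (m' - m%:Z) = k * (p ^ a)%N%:Z.
  by exists (sgz (m' - m%:Z) * t%:Z); rewrite -mulrA -PoszM -ht -intEsg.
exists k.
have -> : k%:~R = ((m' - m%:Z)%:~R / (p ^ a)%:R : K).
  by rewrite ht' intrM -natK mulfK ?pexp_neq0.
rewrite -mulrBl absM intrB -natK (_ : x - m%:R - (m'%:~R - m%:R) = x - m'%:~R); last by ring.
rewrite absV ?pexp_neq0 // abs_pexp invrK.
rewrite -(@ler_pM2r _ (P ^- a)) ?Pexp_gt0 // -mulrA mulfV ?mulr1.
  by apply: le_trans hm' _; rewrite -invfM -exprD addnC.
by rewrite gt_eqF ?exprn_gt0 ?P_gt0.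
Qed.


Lemma pexp_gt0 a : (0 < p ^ a)%N.
Proof. by rewrite expn_gt0 prime_gt0. Qed.

Lemma Zp_ball x a : Zp x -> exists2 i : nat, (i < p ^ a)%N & ball i%:R a x.
Proof.
move=> hx; have [m hm] := hx a.
set d : int := (p ^ a)%N%:Z.
have d0 : d != 0 by rewrite eqz_nat -lt0n pexp_gt0.
have dp : 0 < d by rewrite ltz_nat pexp_gt0.
have hge := modz_ge0 m d0.
exists `|(m %% d)%Z|%N.
  by rewrite -ltz_nat gez0_abs // ltz_pmod.
split => //.
rewrite natK gez0_abs //; apply: abs_tr hm _.
rewrite -intrB abs_int_dvd {1}(divz_eq m d) addrK abszM.
by rewrite dvdn_mull.
Qed.

Lemma ball_uniq (i j a : nat) x : (i < p ^ a)%N -> (j < p ^ a)%N ->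
  ball i%:R a x -> ball j%:R a x -> i = j.
Proof.
move=> hi hj [_ h1] [_ h2].
have : absK (((i%:Z - j%:Z) : int)%:~R : K) <= P ^- a.
  by rewrite intrB -!natK; apply: abs_tr h2; rewrite absB.
rewrite abs_int_dvd => hd.
have hlt : (`|i%:Z - j%:Z|%N < p ^ a)%N by lia.
case: (posnP `|i%:Z - j%:Z|%N) => [h0|hpos]; first by lia.
by have := dvdn_leq hpos hd; rewrite leqNgt hlt.
Qed.


Lemma Pexp_small e : 0 < e -> exists N, forall b, (N <= b)%N -> P ^- b < e.
Proof.
move=> e0; set N := Num.Def.archi_bound (e^-1).
have he : 0 <= e^-1 by rewrite invr_ge0 ltW.
have hN := archi_boundP he.
exists N => b hb.
rewrite -[e]invrK ltf_pV2 ?posrE ?invr_gt0 ?exprn_gt0 ?P_gt0 //.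
apply: lt_le_trans hN _; rewrite -natrX ler_nat.
apply: leq_trans hb _; apply: ltnW; apply: ltn_expl; exact: prime_gt1.
Qed.

Lemma coprime_pf f b : (1 <= f)%N -> coprime (p ^ f - 1) (p ^ b).
Proof.
move=> f1; apply: coprimeXr; rewrite coprime_sym prime_coprime //.
apply/negP => hd.
have : (p %| p ^ f - (p ^ f - 1))%N by apply: dvdn_sub => //; apply: dvdn_exp.
rewrite subKn ?pexp_gt0 // dvdn1 => /eqP p1.
by move: (prime_gt1 pP); rewrite p1.
Qed.


Lemma finmax (Pr : nat -> nat -> Prop) T :
  (forall t N N', (N <= N')%N -> Pr t N -> Pr t N') ->
  (forall t, (t < T)%N -> exists N, Pr t N) -> exists N, forall t, (t < T)%N -> Pr t N.
Proof.
move=> hmono; elim: T => [|T IH] h; first by exists 0%N.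
have [N1 h1] := IH (fun t ht => h t (ltnW ht)).
have [N2 h2] := h T (ltnSn T).
exists (maxn N1 N2) => t; rewrite ltnS leq_eqVlt => /orP [/eqP ->|ht].
  by apply: hmono h2; rewrite leq_maxr.
by apply: hmono (h1 t ht); rewrite leq_maxl.
Qed.

Definition covN (O : nat -> set K) (m a N : nat) :=
  forall x, ball m%:R a x -> exists2 j, (j < N)%N & O j x.

Lemma covN_mono O m a N N' : (N <= N')%N -> covN O m a N -> covN O m a N'.
Proof.
move=> hN h x hx; have [j hj hO] := h x hx; exists j => //.
exact: leq_trans hj hN.
Qed.

Lemma bad_split O m a : ~ (exists N, covN O m a N) ->
  exists i : nat, absK ((i%:R : K) - m%:R) <= P ^- a /\
                  ~ (exists N, covN O i (a.+1) N).
Proof.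
move=> hbad; apply: contrapT => hno; apply: hbad.
pose Pr := fun i N => absK ((i%:R : K) - m%:R) <= P ^- a -> covN O i a.+1 N.
have hmono : forall t N N', (N <= N')%N -> Pr t N -> Pr t N'.
  by move=> t N1 N2 hN12 h1 h2; apply: covN_mono hN12 (h1 h2).
have hex : forall t, (t < p ^ a.+1)%N -> exists N, Pr t N.
  move=> t _; case: (pselect (absK ((t%:R : K) - m%:R) <= P ^- a)) => ht.
    case: (pselect (exists N, covN O t a.+1 N)) => [[N hN]|hN].
      by exists N.
    by exfalso; apply: hno; exists t.
  by exists 0%N.
have [N hN] := finmax hmono hex.
exists N => x [hx hxm].
have [i hi [_ hxi]] := Zp_ball a.+1 hx.
have him : absK ((i%:R : K) - m%:R) <= P ^- a.
  apply: abs_tr hxm; rewrite absB; apply: le_trans hxi _.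
  by rewrite Pexp_le.
exact: (hN i hi him x).
Qed.

Lemma compact (O : nat -> set K) (r0 a0 : nat) :
  (forall x, ball r0%:R a0 x -> exists j, O j x) ->
  (forall j x, ball r0%:R a0 x -> O j x -> exists b, forall y,
      ball r0%:R a0 y -> absK (x - y) <= P ^- b -> O j y) ->
  exists N, covN O r0 a0 N.
Proof.
move=> hcov hopen; apply: contrapT => hno.
pose bad m a := ~ (exists N, covN O m a N).
have hex : forall ma : nat * nat, exists i : nat, bad ma.1 ma.2 ->
    absK ((i%:R : K) - (ma.1)%:R) <= P ^- ma.2 /\ bad i (ma.2).+1.
  move=> [m a].
  case: (pselect (bad m a)) => hb; last by exists 0%N.
  have [i hi] := bad_split hb; by exists i.
have [g hg] := boolp.choice hex.
pose cen := fix cen t := match t with 0 => r0 | t'.+1 => g (cen t', (t' + a0)%N) end.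
have hcen : forall t, bad (cen t) (t + a0)%N /\
    absK ((cen t.+1)%:R - (cen t)%:R : K) <= P ^- (t + a0).
  elim=> [|t [hb _]].
    by have [h1 h2] := hg (r0, a0) hno; split.
  have [h1 h2] := hg (cen t, (t + a0)%N) hb.
  have [h3 h4] := hg (cen t.+1, (t + a0).+1) h2.
  by split; [exact: h2 | exact: h3].
have hcau : forall t u, (t <= u)%N ->
    absK ((cen u)%:R - (cen t)%:R : K) <= P ^- (t + a0).
  move=> t; elim=> [|u IH].
    by rewrite leqn0 => /eqP ->; rewrite subrr abs0 ltW ?Pexp_gt0.
  rewrite leq_eqVlt => /orP [/eqP <-|]; first by rewrite subrr abs0 ltW ?Pexp_gt0.
  rewrite ltnS => htu; apply: abs_tr (IH htu).
  apply: le_trans (proj2 (hcen u)) _; rewrite Pexp_le; exact: leq_add.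
have [hcomp _] : _ := let: And5 _ _ _ _ h := Habs in h.
have [L hL] : exists L, forall e : R, 0 < e -> exists N, forall n, (N <= n)%N ->
    absK ((cen n)%:R - L) < e.
  apply: hcomp => e e0; have [N hN] := Pexp_small e0.
  exists N => m n hm hn.
  wlog hmn : m n hm hn / (m <= n)%N.
    move=> hw; case: (leqP m n) => h; first exact: hw.
    by rewrite absB; apply: hw => //; apply: ltnW.
  rewrite absB; apply: le_lt_trans (hcau _ _ hmn) _; apply: hN.
  exact: leq_trans hm (leq_addr _ _).
have hLt : forall t, absK (L - (cen t)%:R) <= P ^- (t + a0).
  move=> t; have [N hN] := hL _ (Pexp_gt0 (t + a0)).
  have h1 := hN (maxn N t) (leq_maxl _ _).
  rewrite absB in h1; apply: abs_tr (ltW h1) _; exact: hcau (leq_maxr _ _).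
have hLZ : Zp L.
  move=> a; exists (cen a); apply: le_trans (hLt a) _; by rewrite Pexp_le leq_addr.
have hLb : ball r0%:R a0 L by split => //; exact: (hLt 0%N).
have [j hj] := hcov L hLb; have [b hb] := hopen j L hLb hj.
apply: (proj1 (hcen b)); exists j.+1 => x [hx hxc]; exists j => //.
apply: hb.
  split => //; apply: abs_tr _ (hcau 0%N b (leq0n b)).
  by apply: le_trans hxc _; rewrite Pexp_le leq_addl.
have hw : P ^- (b + a0) <= P ^- b by rewrite Pexp_le leq_addr.
apply: abs_tr (le_trans (hLt b) hw) _; rewrite absB; exact: le_trans hxc hw.
Qed.

Lemma sum_mod d k (g : nat -> nat) :
  (\sum_(i < d * k) g (i %% d) = k * \sum_(i < d) g i)%N.
Proof.
elim: k => [|k IH]; first by rewrite muln0 big_ord0.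
rewrite mulnSr big_split_ord /= IH mulSn addnC; congr (_ + _)%N.
apply: eq_bigr => i _.
by rewrite /= (mulnC d k) (modnMDl k i d) modn_small.
Qed.

Lemma sum_le1 T (P : nat -> bool) :
  (forall i j, (i < T)%N -> (j < T)%N -> P i -> P j -> i = j) ->
  (\sum_(i < T) P i <= 1)%N.
Proof.
elim: T => [|T IH] h; first by rewrite big_ord0.
rewrite big_ord_recr /=.
case hT: (P T); last first.
  rewrite addn0; apply: IH => i j hi hj; apply: h; exact: ltnW.
rewrite big1 // => i _; case hi: (P i) => //.
have := h i T (ltnW (ltn_ord i)) (ltnSn T) hi hT.
by move=> e; move: (ltn_ord i); rewrite e ltnn.
Qed.

Lemma mod_of_dvd (i m d : nat) : (d %| `|(i%:Z - m%:Z)%R|)%N -> (i %% d = m %% d)%N.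
Proof.
case: (leqP m i) => h.
  have -> : `|(i%:Z - m%:Z)%R|%N = (i - m)%N by lia.
  by rewrite -eqn_mod_dvd // => /eqP.
have -> : `|(i%:Z - m%:Z)%R|%N = (m - i)%N by lia.
by rewrite -eqn_mod_dvd ?(ltnW h) // => /eqP.
Qed.

Variables (f q k : nat) (s : nat -> K) (sir : nat -> nat -> K -> K) (C D : R).
Hypothesis f1 : (1 <= f)%N.
Hypothesis qk : q = (p ^ k)%N.
Hypothesis sZp : forall n, Zp (s n).
Hypothesis scont : forall i r, (i < p ^ f - 1)%N -> (r < q)%N -> cont_on_Zp p absK (sir i r).
Hypothesis C0 : 0 <= C.
Hypothesis D0 : 0 <= D.
Hypothesis D1 : D < 1.
Hypothesis hint : forall i r n, (i < p ^ f - 1)%N -> (r < q)%N -> A_set p f q i r n ->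
       absK (s n - sir i r n%:R) <= C * D ^+ n.

Lemma eventually_small e : 0 < e -> exists n1, forall n, (n1 <= n)%N -> C * D ^+ n <= e.
Proof.
move=> e0.
have hD : `|D| < 1 by rewrite ger0_norm.
have h : (fun n : nat => C * D ^+ n) @ \oo --> 0.
  by rewrite -(mulr0 C); apply: cvgMl_tmp; exact: cvg_expr.
move/cvgrPdist_le: h => /(_ e e0).
case=> N _ HN; exists N => n /HN /=.
by rewrite sub0r normrN ger0_norm ?mulr_ge0 ?exprn_ge0.
Qed.


Lemma dense i r y a : (i < p ^ f - 1)%N -> (r < q)%N -> Zp y ->
  exists n, A_set p f q i r n /\
    absK (s n - sir i r (r%:R + q%:R * y)) <= P ^- a.
Proof.
move=> hi hr hy.
set z := r%:R + q%:R * y.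
have hz : Zp z by apply: Zp_add; [exact: Zp_nat | apply: Zp_mul => //; exact: Zp_nat].
have [del del0 hdel] := scont hi hr hz (Pexp_gt0 a).
have [N1 hN1] := Pexp_small del0.
set b := maxn N1 k.
have [n1 hn1] := eventually_small (Pexp_gt0 a).
have [m hm] := hz b.
set M := (p ^ f - 1)%N; set Q := (p ^ b)%N.
have Q0 : (0 < Q)%N by apply: pexp_gt0.
have M0 : (0 < M)%N by apply: leq_ltn_trans hi.
set m0 := `|(m %% Q%:Z)%Z|%N.
have hm0 : m0%:Z = (m %% Q%:Z)%Z by rewrite gez0_abs // modz_ge0 // eqz_nat -lt0n.
have m0Q : (m0 < Q)%N by rewrite -ltz_nat hm0 ltz_pmod // ltz_nat.
set n2 := chinese M Q i m0.
set n := (n2 + M * Q * (n1 + r))%N.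
have hMQ : (1 <= M * Q)%N by rewrite muln_gt0 M0 Q0.
have nn1 : (n1 <= n)%N.
  apply: leq_trans (leq_addl n2 _); apply: leq_trans (leq_pmull _ hMQ); exact: leq_addr.
have nr : (r <= n)%N.
  apply: leq_trans (leq_addl n2 _); apply: leq_trans (leq_pmull _ hMQ); exact: leq_addl.
have hnM : (n %% M = i)%N.
  rewrite /n -mulnA addnC mulnC (modnMDl (Q * (n1 + r)) n2 M).
  by rewrite /n2 (chinese_modl (coprime_pf b f1)) modn_small.
have hnQ : (n %% Q = m0)%N.
  rewrite /n mulnAC addnC (modnMDl (M * (n1 + r)) n2 Q).
  by rewrite /n2 (chinese_modr (coprime_pf b f1)) modn_small.
have hnm : absK ((n%:R : K) - m%:~R) <= P ^- b.
  rewrite natK -intrB abs_int_dvd.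
  have e1 : n%:Z = (n %/ Q)%N%:Z * Q%:Z + m0%:Z.
    by rewrite -PoszM -PoszD -hnQ -divn_eq.
  have e2 : m = (m %/ Q%:Z)%Z * Q%:Z + m0%:Z by rewrite hm0 -divz_eq.
  have -> : n%:Z - m = ((n %/ Q)%N%:Z - (m %/ Q%:Z)%Z) * Q%:Z.
    by rewrite e1 {1}e2 mulrBl; ring.
  by rewrite abszM dvdn_mull.
have hbk : (k <= b)%N by rewrite leq_maxr.
have hbN : (N1 <= b)%N by rewrite leq_maxl.
have hnz : absK (z - n%:R) < del.
  rewrite absB; apply: le_lt_trans (hN1 b hbN).
  by apply: abs_tr hnm _; rewrite absB.
have hqy : absK (z - r%:R) <= P ^- k.
  rewrite /z (addrC (r%:R)) addrK absM qk abs_pexp -[X in _ <= X]mulr1.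
  by rewrite ler_pM ?abs_ge0 ?Zp_le1 // ltW ?Pexp_gt0.
have hnrK : absK ((n%:R : K) - r%:R) <= P ^- k.
  have hbk' : P ^- b <= P ^- k by rewrite Pexp_le.
  apply: abs_tr (le_trans hnm hbk') _.
  apply: abs_tr _ hqy; rewrite absB; exact: le_trans hm hbk'.
have hnr : (n %% q = r)%N.
  move: hnrK; rewrite !natK -intrB abs_int_dvd.
  have -> : `|n%:Z - r%:Z|%N = (n - r)%N by lia.
  rewrite -qk -eqn_mod_dvd // => /eqP ->; exact: modn_small.
have hA : A_set p f q i r n by split.
exists n; split => //.
have h1 := hint hi hr hA.
have h2 := hdel (n%:R) (Zp_nat n) hnz.
apply: abs_tr (le_trans h1 (hn1 n nn1)) _.
by rewrite absB; apply: ltW.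
Qed.


Lemma sir_Zp i r y : (i < p ^ f - 1)%N -> (r < q)%N -> Zp y ->
  Zp (sir i r (r%:R + q%:R * y)).
Proof.
move=> hi hr hy a; have [n [_ hn]] := dense a hi hr hy.
have [m hm] := sZp n a; exists m.
by apply: abs_tr hm; rewrite absB.
Qed.

Definition U : set K := [set x | Zp x /\
  exists i r, [/\ (i < p ^ f - 1)%N, (r < q)%N &
    exists2 y, Zp y & x = sir i r (r%:R + q%:R * y)]].

Definition wr (c : option (nat * nat)) : R :=
  match c with None => 0 | Some (_, a) => P ^- a end.

Lemma cover_weightE c : cover_weight R p c = (wr c)%:E.
Proof. by case: c => [[]|]. Qed.

Lemma wr_ge0 c : 0 <= wr c.
Proof. by case: c => [[? ?]|] //=; rewrite ltW ?Pexp_gt0. Qed.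

Definition hit a (i : nat) : bool := `[< exists n, coset p absK i a (s n) >].

Lemma nresE a : nres p absK s a = (\sum_(i < p ^ a) hit a i)%N.
Proof. by []. Qed.

Lemma upper a : (haar p absK U <= ((nres p absK s a)%:R / (p ^ a)%:R)%:E)%E.
Proof.
set c := fun j : nat => if (j < p ^ a)%N && hit a j then Some (j, a) else None.
apply: ereal_inf_lbound; exists c.
  move=> x [hx [i [r [hi hr [y hy ex]]]]]; subst x.
  have [i0 hi0 hb] := Zp_ball a hx.
  have [n [_ hn]] := dense a hi hr hy.
  have hsn : ball (i0%:R) a (s n).
    split; first exact: sZp.
    by case: hb => _ hb; apply: abs_tr hn hb.
  exists i0 => //; rewrite /c hi0 /=.
  have -> : hit a i0 by apply/asboolP; exists n; apply/coset_ball.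
  by apply/coset_ball.
rewrite (nneseries_split 0 (p ^ a)); last first.
  by move=> j _; rewrite cover_weightE lee_fin wr_ge0.
rewrite eseries0 ?adde0; last first.
  by move=> j; rewrite add0n /c leqNgt => /negbTE ->.
rewrite add0n.
under eq_bigr do rewrite cover_weightE.
rewrite sumEFin big_mkord nresE natr_sum mulr_suml; congr (_%:E).
apply: eq_bigr => j _; rewrite /c ltn_ord /=.
by case: (hit a j); rewrite /= ?mul1r ?mul0r // natrX.
Qed.


Lemma ball_coset_q r z : ball r%:R k z -> exists2 y, Zp y & z = r%:R + q%:R * y.
Proof. by move=> /coset_ball [y hy ->]; exists y => //; rewrite qk. Qed.

Lemma coset_q_ball r y : Zp y -> ball r%:R k (r%:R + q%:R * y).
Proof. by move=> hy; apply/coset_ball; exists y => //; rewrite qk. Qed.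

Lemma U_finite (c : nat -> option (nat * nat)) :
  U `<=` \bigcup_j cover_set p absK (c j) ->
  exists Nf, forall x, U x -> exists2 j, (j < Nf)%N & cover_set p absK (c j) x.
Proof.
move=> hU.
pose O i r := fun j => [set z | cover_set p absK (c j) (sir i r z)].
have hir : forall i r, (i < p ^ f - 1)%N -> (r < q)%N -> exists N, covN (O i r) r k N.
  move=> i r hi hr; apply: compact.
    move=> z /ball_coset_q [y hy ->].
    have hx : U (sir i r (r%:R + q%:R * y)).
      split; first exact: sir_Zp.
      by exists i, r; split => //; exists y.
    by have [j _ hj] := hU _ hx; exists j.
  move=> j z hz; rewrite /O /=; case: (c j) => [[m a]|] //= /coset_ball [hZ hm].
  have [del del0 hdel] := scont hi hr (proj1 hz) (Pexp_gt0 a).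
  have [b hb] := Pexp_small del0.
  exists b => y hy hzy; apply/coset_ball; split.
    by have [w hw ->] := ball_coset_q hy; exact: sir_Zp.
  apply: abs_tr hm; rewrite absB; apply: ltW; apply: hdel; first by case: hy.
  exact: le_lt_trans hzy (hb b (leqnn b)).
pose Pr := fun i N => (i < p ^ f - 1)%N -> forall r, (r < q)%N -> covN (O i r) r k N.
have hmono : forall t N N', (N <= N')%N -> Pr t N -> Pr t N'.
  by move=> t N N' hN h ht r hr; apply: covN_mono hN (h ht r hr).
have hall : forall t, (t < p ^ f - 1)%N -> exists N, Pr t N.
  move=> i hi.
  pose Pr' := fun r N => (r < q)%N -> covN (O i r) r k N.
  have hmono' : forall t N N', (N <= N')%N -> Pr' t N -> Pr' t N'.
    by move=> t N N' hN h ht; apply: covN_mono hN (h ht).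
  have hall' : forall r, (r < q)%N -> exists N, Pr' r N.
    move=> r hr; have [N hN] := hir i r hi hr; by exists N.
  have [N hN] := finmax hmono' hall'.
  by exists N => _ r hr; exact: hN.
have [Nf hNf] := finmax hmono hall.
exists Nf => x [hx [i [r [hi hr [y hy ex]]]]].
have := hNf i hi hi r hr _ (coset_q_ball r hy).
by case=> j hj hO; exists j => //; rewrite ex.
Qed.


Definition lvl (c : option (nat * nat)) : nat :=
  match c with Some (_, a) => a | None => 0%N end.

Lemma q_gt0 : (0 < q)%N.
Proof. by rewrite qk pexp_gt0. Qed.

Lemma M_gt0 : (0 < p ^ f - 1)%N.
Proof.
have h1 := prime_gt1 pP.
have h2 : (p ^ 1 <= p ^ f)%N by apply: leq_pexp2l; [exact: prime_gt0 | exact: f1].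
rewrite expn1 in h2; lia.
Qed.

Lemma s_in_cover (c : nat -> option (nat * nat)) Nf :
  (forall x, U x -> exists2 j, (j < Nf)%N & cover_set p absK (c j) x) ->
  exists n0, forall n, (n0 <= n)%N -> exists2 j, (j < Nf)%N &
    exists m a, c j = Some (m, a) /\ ball m%:R a (s n).
Proof.
move=> hc.
set amax := (\max_(j < Nf) lvl (c j))%N.
have [n0 hn0] := eventually_small (Pexp_gt0 amax).
exists n0 => n hn.
set i' := (n %% (p ^ f - 1))%N; set r' := (n %% q)%N.
have hi' : (i' < p ^ f - 1)%N by rewrite ltn_pmod ?M_gt0.
have hr' : (r' < q)%N by rewrite ltn_pmod ?q_gt0.
have hA : A_set p f q i' r' n by split.
have en : (n%:R : K) = r'%:R + q%:R * (n %/ q)%:R.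
  by rewrite {1}(divn_eq n q) natrD natrM mulrC addrC.
have hU : U (sir i' r' n%:R).
  rewrite en; split; first by apply: sir_Zp => //; exact: Zp_nat.
  by exists i', r'; split => //; exists (n %/ q)%:R => //; exact: Zp_nat.
have [j hj hcov] := hc _ hU.
exists j => //.
move: hcov; case hcj : (c j) => [[m a]|] //= /coset_ball [hZ hm].
exists m, a; split => //; split; first exact: sZp.
have ha : (a <= amax)%N.
  by have := @leq_bigmax _ (fun j : 'I_Nf => lvl (c j)) (Ordinal hj); rewrite /= hcj.
apply: abs_tr hm.
apply: le_trans (hint hi' hr' hA) _; apply: le_trans (hn0 n hn) _.
by rewrite Pexp_le.
Qed.


Lemma cnt_mod (a al v : nat) : (a <= al)%N ->
  (\sum_(i < p ^ al) (i %% p ^ a == v %% p ^ a) = p ^ (al - a))%N.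
Proof.
move=> hal.
have -> : (p ^ al = p ^ a * p ^ (al - a))%N by rewrite -expnD subnKC.
rewrite (sum_mod (p ^ a) (p ^ (al - a)) (fun u => ((u == v %% p ^ a)%N : nat))).
have hv : (v %% p ^ a < p ^ a)%N by rewrite ltn_pmod ?pexp_gt0.
rewrite (bigD1 (Ordinal hv)) //= eqxx big1 ?addn0 ?muln1 // => u hu.
case e: (val u == v %% p ^ a)%N => //.
by move: hu; rewrite -val_eqE /= e.
Qed.

Definition ind (c : option (nat * nat)) (i : nat) : bool :=
  match c with Some (m, a) => (i %% p ^ a == m %% p ^ a)%N | None => false end.

Definition cnt (c : option (nat * nat)) (al : nat) : nat :=
  match c with Some (_, a) => p ^ (al - a) | None => 0 end.

Lemma count_nat (c : nat -> option (nat * nat)) Nf n0 al :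
  (forall n, (n0 <= n)%N -> exists2 j, (j < Nf)%N &
    exists m a, c j = Some (m, a) /\ ball m%:R a (s n)) ->
  (forall j, (j < Nf)%N -> (lvl (c j) <= al)%N) ->
  (nres p absK s al <= n0 + \sum_(j < Nf) cnt (c j) al)%N.
Proof.
move=> hcov hlvl.
pose g1 i := (\sum_(n < n0) `[< ball i%:R al (s n) >])%N.
have hpt : forall i : 'I_(p ^ al), (hit al i <= g1 i + \sum_(j < Nf) ind (c j) i)%N.
  move=> i; case hh: (hit al i) => //.
  move/asboolP: hh => [n /coset_ball hn].
  case: (ltnP n n0) => hn0.
    apply: leq_trans (leq_addr _ _); rewrite /g1 (bigD1 (Ordinal hn0)) //=.
    by rewrite asboolT.
  have [j hj [m [a [hcj hb]]]] := hcov n hn0.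
  apply: leq_trans (leq_addl _ _); rewrite (bigD1 (Ordinal hj)) //= hcj.
  suff hh : (i %% p ^ a == m %% p ^ a)%N by rewrite /= hh.
  have ha : (a <= al)%N by have := hlvl j hj; rewrite hcj.
  apply/eqP; apply: mod_of_dvd; rewrite -abs_int_dvd intrB -!natK.
  case: hn => _ hn; case: hb => _ hb.
  apply: abs_tr _ hb; rewrite absB; apply: le_trans hn _; by rewrite Pexp_le.
rewrite nresE.
apply: (@leq_trans (\sum_(i < p ^ al) (g1 i + \sum_(j < Nf) ind (c j) i))%N).
  by apply: leq_sum => i _; exact: hpt.
rewrite big_split /=; apply: leq_add.
  rewrite /g1 exchange_big /=.
  apply: (@leq_trans (\sum_(n < n0) 1)%N); last by rewrite sum_nat_const card_ord muln1.
  apply: leq_sum => n _.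
  apply: (@sum_le1 (p ^ al) (fun i => `[< ball i%:R al (s n) >])).
  move=> i1 i2 h1 h2 /asboolP b1 /asboolP b2; exact: ball_uniq h1 h2 b1 b2.
rewrite exchange_big /=; apply: leq_sum => j _.
case hcj : (c j) => [[m a]|] /=; last by rewrite big1.
have ha : (a <= al)%N by have := hlvl j (ltn_ord j); rewrite hcj.
by rewrite cnt_mod.
Qed.


Lemma count_real (c : nat -> option (nat * nat)) Nf n0 al :
  (forall n, (n0 <= n)%N -> exists2 j, (j < Nf)%N &
    exists m a, c j = Some (m, a) /\ ball m%:R a (s n)) ->
  (forall j, (j < Nf)%N -> (lvl (c j) <= al)%N) ->
  (nres p absK s al)%:R / (p ^ al)%:R <= n0%:R / (p ^ al)%:R + \sum_(j < Nf) wr (c j).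
Proof.
move=> hcov hlvl.
have h := count_nat hcov hlvl.
have hp : (0 : R) < (p ^ al)%:R by rewrite ltr0n pexp_gt0.
have h1 : ((nres p absK s al)%:R : R) <= (n0 + \sum_(j < Nf) cnt (c j) al)%N%:R.
  by rewrite ler_nat.
have h2 := ler_wpM2r (ltW (eq_ind_r is_true hp (invr_gt0 _))) h1.
apply: le_trans h2 _.
rewrite natrD natr_sum mulrDl mulr_suml lerD2l.
apply: ler_sum => j _.
have hl := hlvl j (ltn_ord j).
case: (c j) hl => [[m a]|] /= hl; last by rewrite mul0r.
rewrite !natrX exprB ?unitfE ?gt_eqF ?P_gt0 //.
by rewrite mulrAC divff ?mul1r // gt_eqF // exprn_gt0 // P_gt0.
Qed.


Lemma haar_ge0 : (0 <= haar p absK U)%E.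
Proof.
apply/ereal_infP => y [c _ <-]; apply: nneseries_ge0 => j _ _.
by rewrite cover_weightE lee_fin wr_ge0.
Qed.

Lemma main_cvg :
  (fun a : nat => (((nres p absK s a)%:R / (p ^ a)%:R : R))%:E) @ \oo -->
    haar p absK U.
Proof.
have hge := haar_ge0.
have hfin : haar p absK U \is a fin_num.
  rewrite ge0_fin_numE //; have hu := upper 0%N. exact: (Order.POrderTheory.le_lt_trans hu (ltry _)).
rewrite -(fineK hfin); set h := fine (haar p absK U).
have hup : forall a, h <= (nres p absK s a)%:R / (p ^ a)%:R.
  by move=> a; rewrite -lee_fin /h fineK //; exact: upper.
apply: cvg_EFin; first by exists 0%N.
apply/cvgrPdist_le => e e0 /=.
have e20 : 0 < e / 2 by rewrite divr_gt0.
have [x [c hc <-] hx] := lb_ereal_inf_adherent e20 hfin.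
have [Nf hNf] := U_finite hc.
have [n0 hn0] := s_in_cover hNf.
set amax := (\max_(j < Nf) lvl (c j))%N.
set W := \sum_(j < Nf) wr (c j).
have hW : W < h + e / 2.
  rewrite -lte_fin EFinD /h fineK //; apply: le_lt_trans _ hx.
  rewrite /W -sumEFin.
  have := @nneseries_lim_ge R (fun j => cover_weight R p (c j)) xpredT 0%N Nf.
  rewrite big_mkord; under eq_bigr do rewrite cover_weightE; apply.
  by move=> j _ _; rewrite cover_weightE lee_fin wr_ge0.
set eps := e / 2 / (n0%:R + 1).
have eps0 : 0 < eps by rewrite divr_gt0 // ltr_wpDl.
have [a1 ha1] := Pexp_small eps0.
exists (maxn amax a1) => // al hal.
have hal1 : (a1 <= al)%N by apply: leq_trans hal; rewrite leq_maxr.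
have hlvl : forall j, (j < Nf)%N -> (lvl (c j) <= al)%N.
  move=> j hj; apply: leq_trans (leq_trans _ (leq_maxl amax a1)) hal.
  exact: (@leq_bigmax _ (fun j : 'I_Nf => lvl (c j)) (Ordinal hj)).
have hc2 := count_real hn0 hlvl.
have hn0e : n0%:R / (p ^ al)%:R <= e / 2.
  rewrite natrX; have := ha1 al hal1; rewrite /eps => hlt.
  have hn1 : (0 : R) < n0%:R + 1 by rewrite ltr_wpDl.
  rewrite ltr_pdivlMr // in hlt.
  apply: le_trans (ltW hlt); rewrite mulrC ler_wpM2l ?ler0n //.
  by rewrite lerDl.
have := hup al; move: hc2 hn0e hW.
set u := (nres p absK s al)%:R / (p ^ al)%:R.
move=> h1 h2 h3 h4.
rewrite -/W in h1; rewrite ler_norml; apply/andP; split; lra.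
Qed.

End Basics.

Theorem theorem4p3 (R : realType) (p : nat) (K : fieldType) (absK : K -> R)
    (f q : nat) (s : nat -> K) (sir : nat -> nat -> K -> K) :
  prime p -> (1 <= f)%N -> (exists k, q = p ^ k)%N ->
  is_finite_ext_Qp p absK ->
  (forall n, Zp_in p absK (s n)) ->
  (forall i r, (i < p ^ f - 1)%N -> (r < q)%N -> cont_on_Zp p absK (sir i r)) ->
  (exists C D : R, [/\ 0 <= C, 0 <= D, D < 1 &
     forall i r n, (i < p ^ f - 1)%N -> (r < q)%N -> A_set p f q i r n ->
       absK (s n - sir i r n%:R) <= C * D ^+ n]) ->
  (fun a : nat => (((nres p absK s a)%:R / (p ^ a)%:R : R))%:E) @ \oo -->
    haar p absK
      [set x | Zp_in p absK x /\
         exists i r, [/\ (i < p ^ f - 1)%N, (r < q)%N &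
           exists2 y, Zp_in p absK y & x = sir i r (r%:R + q%:R * y)]].
Proof.
move=> pP f1 [k qk] Habs sZp scont [C [D [C0 D0 D1 hint]]].
exact: (main_cvg pP Habs f1 qk sZp scont C0 D0 D1 hint).
Qed.
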